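(* Let $d\ge2$ and $p,q\ge0$. Then $$\sum_{j=0}^{\min\{p,q\}}Q^{(d)}_{p-j,q-j}(z)=\frac{d}{p+q+d}\,Q^{(d+1)}_{pq}(z),$$ equivalently, $$Q^{(d)}_{p,q}(z)=\frac{d}{p+q+d}Q^{(d+1)}_{pq}(z)-\frac{d}{p+q+d-2}Q^{(d+1)}_{p-1,q-1}(z),$$ with the convention $Q_{a,b}=0$ if $a<0$ or $b<0$.
   Context: For $d\ge2$ and $p,q\ge0$, the complex Gegenbauer polynomial is the polynomial in $z,\overline z$ $$Q_{pq}^{(d)}(z)=\frac{p+q+d-1}{(d-1)!}\sum_{j=0}^{\min\{p,q\}}(-1)^j\frac{(d+p+q-j-2)!}{j!(p-j)!(q-j)!}z^{p-j}\overline{z}^{q-j}.$$ *)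

(* Defs.v *)
(* Complex numbers: any numClosedFieldType C (e.g. algC, or
   R[i] for a real closed field R); conjugation is Num.conj, written z^*. *)
From mathcomp Require Import all_boot all_order all_algebra.
Set Implicit Arguments. Unset Strict Implicit. Unset Printing Implicit Defensive.
Import Order.TTheory GRing.Theory Num.Theory.
Local Open Scope ring_scope.

Definition gegQ {C : numClosedFieldType} (d p q : nat) (z : C) : C :=
  ((p + q + d - 1)%N%:R / ((d - 1)`!)%:R) *
  \sum_(j < (minn p q).+1)
     ((-1) ^+ j * (((d + p + q - j - 2)`!)%:R / ((j`! * (p - j)`! * (q - j)`!)%N)%:R)
      * z ^+ (p - j) * (z^*) ^+ (q - j)).

Definition gegQz {C : numClosedFieldType} (d : nat) (a b : int) (z : C) : C :=
  match a, b with
  | Posz p, Posz q => gegQ d p q z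
  | _, _ => 0
  end.

(* Main.v *)
Require Import Defs.
From mathcomp Require Import all_boot all_order all_algebra.
From mathcomp Require Import zify ring.
Import Order.TTheory GRing.Theory Num.Theory.
Local Open Scope ring_scope.

Section S.
Variable C : numClosedFieldType.

Definition tQ (d p q j : nat) (z : C) : C :=
  (-1) ^+ j * (((d + p + q - j - 2)`!)%:R / ((j`! * (p - j)`! * (q - j)`!)%N)%:R)
      * z ^+ (p - j) * (z^*) ^+ (q - j).
Definition AQ (d p q : nat) : C := ((p + q + d - 1)%N%:R / ((d - 1)`!)%:R).

Lemma natn0 (n : nat) : (n.+1)%:R != 0 :> C.
Proof. by rewrite pnatr_eq0. Qed.
Lemma factn0 (n : nat) : (n`!)%:R != 0 :> C.
Proof. by rewrite pnatr_eq0 -lt0n fact_gt0. Qed.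

Lemma term0 d p q z : (2 <= d)%N ->
  AQ d p q * tQ d p q 0 z = (d%:R / (p + q + d)%N%:R * AQ d.+1 p q) * tQ d.+1 p q 0 z.
Proof.
case: d => [|[|d']] // _.
rewrite /AQ /tQ.
rewrite (_ : (p + q + d'.+2 - 1 = (p+q+d').+1)%N); last by lia.
rewrite (_ : (d'.+2 - 1 = d'.+1)%N); last by lia.
rewrite (_ : (d'.+3 - 1 = d'.+2)%N); last by lia.
rewrite (_ : (d'.+2 + p + q - 0 - 2 = p+q+d')%N); last by lia.
rewrite (_ : (d'.+3 + p + q - 0 - 2 = (p+q+d').+1)%N); last by lia.
rewrite (_ : (p + q + d'.+3 - 1 = (p+q+d').+2)%N); last by lia.
rewrite (_ : (p + q + d'.+2 = (p+q+d').+2)%N); last by lia.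
rewrite !subn0 fact0 (factS d'.+1) (factS (p+q+d')).
move: (fact_gt0 d'.+1) (fact_gt0 p) (fact_gt0 q) (fact_gt0 (p+q+d')).
move: (d'.+1)`! (p`!) (q`!) ((p+q+d')`!) => F1 F2 F3 F4 g1 g2 g3 g4.
rewrite !natrM expr0.
have nz : forall n, (0 < n)%N -> n%:R != 0 :> C by move=> n hn; rewrite pnatr_eq0 -lt0n.
move: (nz _ g1) (nz _ g2) (nz _ g3) (nz _ g4) (natn0 (p+q+d')) (natn0 (p+q+d').+1) (natn0 d'.+1).
move: (F1%:R) (F2%:R) (F3%:R) (F4%:R) ((p+q+d').+1%:R) ((p+q+d').+2%:R) (d'.+2%:R).
move=> x1 x2 x3 x4 x5 x6 x7 h1 h2 h3 h4 h5 h6 h7.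
field.
by rewrite ?h1 ?h2 ?h3 ?h4 ?h5 ?h6 ?h7.
Qed.

Lemma termS d p q j z : (2 <= d)%N -> (j <= p)%N -> (j <= q)%N ->
  AQ d p.+1 q.+1 * tQ d p.+1 q.+1 j.+1 z =
  (d%:R / (p.+1 + q.+1 + d)%N%:R * AQ d.+1 p.+1 q.+1) * tQ d.+1 p.+1 q.+1 j.+1 z
  - (d%:R / ((p.+1 + q.+1 + d)%N%:R - 2) * AQ d.+1 p q) * tQ d.+1 p q j z.
Proof.
case: d => [|[|d']] // _ hp hq.
have [a ->] : exists a, p = (a + j)%N by exists (p - j)%N; lia.
have [b ->] : exists b, q = (b + j)%N by exists (q - j)%N; lia.
rewrite /AQ /tQ.
rewrite (_ : ((a+j).+1 + (b+j).+1 + d'.+2 - 1 = (d'+a+b+j).+2 + j.+1)%N); last by lia.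
rewrite (_ : (d'.+2 - 1 = d'.+1)%N); last by lia.
rewrite (_ : (d'.+2 + (a+j).+1 + (b+j).+1 - j.+1 - 2 = (d'+a+b+j).+1)%N); last by lia.
rewrite (_ : ((a+j).+1 - j.+1 = a)%N); last by lia.
rewrite (_ : ((b+j).+1 - j.+1 = b)%N); last by lia.
rewrite (_ : ((a+j).+1 + (b+j).+1 + d'.+3 - 1 = (d'+a+b+j+j).+4)%N); last by lia.
rewrite (_ : ((a+j).+1 + (b+j).+1 + d'.+2 = (d'+a+b+j+j).+4)%N); last by lia.
rewrite (_ : (d'.+3 - 1 = d'.+2)%N); last by lia.
rewrite (_ : (d'.+3 + (a+j).+1 + (b+j).+1 - j.+1 - 2 = (d'+a+b+j).+2)%N); last by lia.
rewrite (_ : ((a+j) + (b+j) + d'.+3 - 1 = (d'+a+b+j+j).+2)%N); last by lia.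
rewrite (_ : (d'.+3 + (a+j) + (b+j) - j - 2 = (d'+a+b+j).+1)%N); last by lia.
rewrite (_ : ((a+j) - j = a)%N); last by lia.
rewrite (_ : ((b+j) - j = b)%N); last by lia.
rewrite (_ : (d'+a+b+j+j).+4%:R - 2 = (d'+a+b+j+j).+2%:R :> C); last first.
  by rewrite -[(d'+a+b+j+j).+4]addn2 natrD addrK.
rewrite (factS d'.+1) (factS j) (factS (d'+a+b+j).+1).
move: (fact_gt0 d'.+1) (fact_gt0 j) (fact_gt0 a) (fact_gt0 b) (fact_gt0 (d'+a+b+j).+1).
move: (d'.+1)`! (j`!) (a`!) (b`!) ((d'+a+b+j).+1`!) => F1 F2 F3 F4 F5 g1 g2 g3 g4 g5.
rewrite (natrD _ (d'+a+b+j).+2 j.+1) !natrM !exprS.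
have nz : forall n, (0 < n)%N -> n%:R != 0 :> C by move=> n hn; rewrite pnatr_eq0 -lt0n.
move: (nz _ g1) (nz _ g2) (nz _ g3) (nz _ g4) (nz _ g5) (natn0 j) (natn0 d'.+1)
  (natn0 (d'+a+b+j+j).+3) (natn0 (d'+a+b+j+j).+1).
move: (F1%:R) (F2%:R) (F3%:R) (F4%:R) (F5%:R) (j.+1%:R) (d'.+2%:R) ((d'+a+b+j+j).+4%:R) ((d'+a+b+j+j).+2%:R).
move=> x1 x2 x3 x4 x5 x6 x7 x8 x9 h1 h2 h3 h4 h5 h6 h7 h8 h9.
field.
by rewrite ?h1 ?h2 ?h3 ?h4 ?h5 ?h6 ?h7 ?h8 ?h9.
Qed.

Lemma gegQE d p q (z : C) : gegQ d p q z = AQ d p q * \sum_(j < (minn p q).+1) tQ d p q j z.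
Proof. by []. Qed.

Lemma termS' d p q (j : nat) (z : C) : (2 <= d)%N -> (j < (minn p q).+1)%N ->
  AQ d p.+1 q.+1 * tQ d p.+1 q.+1 j.+1 z =
  (d%:R / (p.+1 + q.+1 + d)%N%:R * AQ d.+1 p.+1 q.+1) * tQ d.+1 p.+1 q.+1 j.+1 z
  - (d%:R / ((p.+1 + q.+1 + d)%N%:R - 2) * AQ d.+1 p q) * tQ d.+1 p q j z.
Proof. by move=> hd; rewrite ltnS leq_min => /andP[h1 h2]; apply: termS. Qed.

Lemma part2 d p q (z : C) : (2 <= d)%N ->
  gegQ d p q z
     = (d%:R / (p + q + d)%N%:R) * gegQz d.+1 (Posz p) (Posz q) z
       - (d%:R / ((p + q + d)%N%:R - 2)) * gegQz d.+1 (Posz p - 1) (Posz q - 1) z.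
Proof.
move=> hd.
case: p => [|p]; last case: q => [|q].
- rewrite (_ : gegQz d.+1 (Posz 0 - 1) _ _ = 0) // mulr0 subr0.
  rewrite [gegQz _ _ _ _]/= !gegQE ?min0n ?minn0 !big_ord1 [RHS]mulrA; exact: (term0 _ _ _ _ hd).
- rewrite (_ : gegQz d.+1 (Posz p.+1 - 1) _ _ = 0) // mulr0 subr0.
  rewrite [gegQz _ _ _ _]/= !gegQE ?min0n ?minn0 !big_ord1 [RHS]mulrA; exact: (term0 _ _ _ _ hd).
rewrite (_ : Posz p.+1 - 1 = Posz p); last by rewrite -addn1 PoszD addrK.
rewrite (_ : Posz q.+1 - 1 = Posz q); last by rewrite -addn1 PoszD addrK.
rewrite [gegQz _ p.+1 _ _]/= [gegQz _ p _ _]/= !gegQE minnSS big_ord_recl [in RHS]big_ord_recl.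
rewrite [LHS]mulrDr [in LHS]mulr_sumr.
under eq_bigr => i _ do rewrite lift0 (termS' _ _ _ _ _ hd (ltn_ord i)).
rewrite sumrB -!mulr_sumr (term0 _ _ _ _ hd).
set u := tQ _ _ _ 0 z. set S1 := \sum_(i < _) _. set S2 := \sum_(i < _) _.
ring.
Qed.

Lemma part1 d p q (z : C) : (2 <= d)%N ->
  \sum_(j < (minn p q).+1) gegQ d (p - j) (q - j) z
     = (d%:R / (p + q + d)%N%:R) * gegQ d.+1 p q z.
Proof.
move=> hd; elim: p q => [|p IH] [|q].
- by rewrite big_ord1 !subn0 (part2 _ _ _ _ hd) /= mulr0 subr0.
- by rewrite min0n big_ord1 !subn0 (part2 _ _ _ _ hd) /= mulr0 subr0.
- by rewrite minn0 big_ord1 !subn0 (part2 _ _ _ _ hd) (_ : gegQz d.+1 (Posz p.+1 - 1) _ _ = 0) // mulr0 subr0.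
rewrite minnSS big_ord_recl !subn0.
under eq_bigr => i _ do rewrite lift0 !subSS.
rewrite IH (part2 _ _ _ _ hd).
rewrite (_ : Posz p.+1 - 1 = Posz p); last by rewrite -addn1 PoszD addrK.
rewrite (_ : Posz q.+1 - 1 = Posz q); last by rewrite -addn1 PoszD addrK.
rewrite (_ : (p.+1 + q.+1 + d)%N = (p + q + d).+2); last by lia.
rewrite -[(p + q + d).+2]addn2 natrD addrK /=.
by rewrite subrK.
Qed.
End S.

Theorem lemma5p10 (C : numClosedFieldType) (d p q : nat) (hd : (2 <= d)%N) (z : C) :
  (\sum_(j < (minn p q).+1) gegQ d (p - j) (q - j) z
     = (d%:R / (p + q + d)%N%:R) * gegQ d.+1 p q z)
  /\
  (gegQ d p q z
     = (d%:R / (p + q + d)%N%:R) * gegQz d.+1 (Posz p) (Posz q) z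
       - (d%:R / ((p + q + d)%N%:R - 2)) * gegQz d.+1 (Posz p - 1) (Posz q - 1) z).
Proof. by split; [exact: part1 | exact: part2]. Qed.
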